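(* Let $n\ge2$ and $q\ge1$ be integers and $\beta>0$, $J>0$, $H\in\mathbb{R}$. For $\pi\in S_3$ let $\mathrm{CDdes}(\pi)=\mathrm{des}(\pi)+\mathrm{des}(\pi^{-1})$, where $\mathrm{des}(\pi)$ is the number of $i\in\{1,2\}$ with $\pi(i)>\pi(i+1)$, and put $\phi(\alpha,\sigma)=1-\tfrac12\mathrm{CDdes}(\alpha^{-1}\sigma)$. For $\vec\pi=(\pi^{(1)},\ldots,\pi^{(n)})\in S_3^n$ define the mean-field Hamiltonian $$\mathcal{H}^{(mean)}(\vec\pi)=-\frac{qJ}{n-1}\sum_{1\le i<j\le n}\phi(\pi^{(i)},\pi^{(j)})-H\sum_{i=1}^n\phi(\pi^{(i)},\mathrm{id}),$$ and $Z_n(\beta)=\sum_{\vec\pi\in S_3^n}\exp(-\beta\mathcal{H}^{(mean)}(\vec\pi))$. Then $$Z_n(\beta)=e^{-\frac{\beta}{2}\left(\frac{nqJ}{n-1}+\frac{H^2(n-1)}{qJ}\right)}\sum_{a+b+c=n}\binom{n}{a,b,c}\,G_a\!\left(\tfrac{H(n-1)}{qJ};e^{\frac{\beta qJ}{2(n-1)}}\right)G_b\!\left(0;e^{\frac{\beta qJ}{2(n-1)}}\right)G_c\!\left(0;e^{\frac{\beta qJ}{2(n-1)}}\right),$$ where the sum is over nonnegative integers $a,b,c$ and $$G_m(\ell;x):=\sum_{i+j=m}\binom{m}{i}x^{(i-j+\ell)^2}=\sum_{i=0}^{m}\binom{m}{i}x^{(2i-m+\ell)^2}.$$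
   Context: Permutations of $\{1,2,3\}$ are composed as functions, $(\alpha^{-1}\sigma)(x)=\alpha^{-1}(\sigma(x))$; $\mathrm{id}=123$. $\binom{n}{a,b,c}$ denotes the multinomial coefficient. *)

(* Defs.v *)
From HB Require Import structures.
From mathcomp Require Import all_boot all_order all_algebra all_fingroup.
From mathcomp Require Import all_classical all_reals all_analysis.
Set Implicit Arguments. Unset Strict Implicit. Unset Printing Implicit Defensive.
Import Order.TTheory GRing.Theory Num.Theory.
Local Open Scope ring_scope.

(* des(pi) = #{ i in {1,2} : pi(i) > pi(i+1) }; positions 1,2,3 are ordinals 0,1,2 *)
Definition des (p : 'S_3) : nat :=
  #|[set i : 'I_2 | (p (widen_ord (leqnSn 2) i) > p (lift ord0 i))%N]|.

Definition CDdes (p : 'S_3) : nat := (des p + des (p^-1)%g)%N.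

(* In mathcomp, (s * t) x = t (s x) (lemma permM), so the function
   x |-> alpha^-1 (sigma x) is the permutation (sigma * alpha^-1)%g. *)
Definition compinv (alpha sigma : 'S_3) : 'S_3 := (sigma * alpha^-1)%g.

Definition phi {R : realType} (alpha sigma : 'S_3) : R :=
  1 - (CDdes (compinv alpha sigma))%:R / 2.

Definition Hmean {R : realType} (n q : nat) (J H : R)
    (p : {ffun 'I_n -> 'S_3}) : R :=
  - ((q%:R * J) / (n%:R - 1)) *
      (\sum_(i < n) \sum_(j < n | (i < j)%N) phi (p i) (p j))
  - H * (\sum_(i < n) phi (p i) 1%g).

Definition Zn {R : realType} (n q : nat) (J H beta : R) : R :=
  \sum_(p : {ffun 'I_n -> 'S_3}) expR (- beta * Hmean q J H p).

Definition G {R : realType} (m : nat) (l x : R) : R :=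
  \sum_(i < m.+1) ('C(m, i))%:R * powR x ((i%:R - (m - i)%:R + l) ^+ 2).

Definition multinom (n a b c : nat) : nat := (n`! %/ (a`! * b`! * c`!))%N.

(* Main.v *)
Require Import Defs.
From HB Require Import structures.
From mathcomp Require Import all_boot all_order all_algebra all_fingroup.
From mathcomp Require Import all_classical all_reals all_analysis.
From mathcomp Require Import zify ring lra.
Import Order.TTheory GRing.Theory Num.Theory.

Definition i0 : 'I_3 := ord0.
Definition i1 : 'I_3 := Ordinal (isT : (1 < 3)%N).
Definition i2 : 'I_3 := Ordinal (isT : (2 < 3)%N).

Lemma des_val p : des p = ((p i1 < p i0) + (p i2 < p i1))%N.
Proof.
rewrite /des -sum1_card big_mkcond /= !big_ord_recl big_ord0 !inE /=.
have -> : widen_ord (leqnSn 2) ord0 = i0 by apply: val_inj.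
have -> : lift ord0 (ord0 : 'I_2) = i1 by apply: val_inj.
have -> : widen_ord (leqnSn 2) (lift ord0 (ord0 : 'I_1)) = i1 by apply: val_inj.
have -> : lift ord0 (lift ord0 (ord0 : 'I_1)) = i2 by apply: val_inj.
by case: (_ < _)%N; case: (_ < _)%N.
Qed.

Lemma ord3P (x : 'I_3) : x = i0 \/ x = i1 \/ x = i2.
Proof.
case: x => [[|[|[|]]] Hx] //.
- by left; apply: val_inj.
- by right; left; apply: val_inj.
- by right; right; apply: val_inj.
Qed.

Lemma inv_val (p : 'S_3) y :
  (p^-1)%g y = if p i0 == y then i0 else if p i1 == y then i1 else i2.
Proof.
have -> : y = p ((p^-1)%g y) by rewrite permKV.
rewrite !(inj_eq perm_inj) permK.
by case: (ord3P ((p^-1)%g y)) => [->|[->|->]].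
Qed.

Definition cm (k : nat) : nat := if k == 0%N then 1%N else if k == 1%N then 0%N else 2%N.
Definition uf (a0 a1 a2 : 'I_3) (k : nat) : nat :=
  if (a1 : nat) == cm k then (if (a0 < a2)%N then 2%N else 0%N) else 1%N.
Definition u (t : 'S_3) (k : nat) : nat := uf (t i0) (t i1) (t i2) k.

Definition finv (a0 a1 a2 : 'I_3) (y : 'I_3) : 'I_3 :=
  if a0 == y then i0 else if a1 == y then i1 else i2.
Definition fdes (a0 a1 a2 : 'I_3) : nat := ((a1 < a0) + (a2 < a1))%N.
Definition fcd (a0 a1 a2 s0 s1 s2 : 'I_3) : nat :=
  let r0 := finv a0 a1 a2 s0 in
  let r1 := finv a0 a1 a2 s1 in
  let r2 := finv a0 a1 a2 s2 in
  (fdes r0 r1 r2 + fdes (finv r0 r1 r2 i0) (finv r0 r1 r2 i1) (finv r0 r1 r2 i2))%N.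

Lemma CDdes_val a s : CDdes (compinv a s) =
  fcd (a i0) (a i1) (a i2) (s i0) (s i1) (s i2).
Proof.
rewrite /CDdes !des_val /fcd /fdes /compinv !inv_val !permM !inv_val.
by [].
Qed.

Definition dist3 (a0 a1 a2 : 'I_3) := [&& a0 != a1, a0 != a2 & a1 != a2].

Lemma dist_perm (t : 'S_3) : dist3 (t i0) (t i1) (t i2).
Proof. by rewrite /dist3 !(inj_eq perm_inj). Qed.

Lemma check1 (a0 a1 a2 s0 s1 s2 : 'I_3) :
  dist3 a0 a1 a2 -> dist3 s0 s1 s2 ->
  (2 * (uf a0 a1 a2 0 * uf s0 s1 s2 0 + uf a0 a1 a2 1 * uf s0 s1 s2 1
     + uf a0 a1 a2 2 * uf s0 s1 s2 2) + fcd a0 a1 a2 s0 s1 s2 + 4 =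
   2 * (uf a0 a1 a2 0 + uf a0 a1 a2 1 + uf a0 a1 a2 2 + (uf s0 s1 s2 0 + uf s0 s1 s2 1 + uf s0 s1 s2 2)))%N.
Proof.
Time by case: (ord3P a0) => [->|[->|->]]; case: (ord3P a1) => [->|[->|->]];
  case: (ord3P a2) => [->|[->|->]]; case: (ord3P s0) => [->|[->|->]];
  case: (ord3P s1) => [->|[->|->]]; case: (ord3P s2) => [->|[->|->]].
Qed.

Definition pf (a0 a1 a2 : 'I_3) (x : 'I_3) : 'I_3 :=
  if x == i0 then a0 else if x == i1 then a1 else a2.


Lemma inj1 : injective (pf i0 i1 i2). Proof. by move=> x y; case: (ord3P x) => [->|[->|->]]; case: (ord3P y) => [->|[->|->]]. Qed.
Lemma inj2 : injective (pf i2 i1 i0). Proof. by move=> x y; case: (ord3P x) => [->|[->|->]]; case: (ord3P y) => [->|[->|->]]. Qed.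
Lemma inj3 : injective (pf i1 i0 i2). Proof. by move=> x y; case: (ord3P x) => [->|[->|->]]; case: (ord3P y) => [->|[->|->]]. Qed.
Lemma inj4 : injective (pf i2 i0 i1). Proof. by move=> x y; case: (ord3P x) => [->|[->|->]]; case: (ord3P y) => [->|[->|->]]. Qed.
Lemma inj5 : injective (pf i0 i2 i1). Proof. by move=> x y; case: (ord3P x) => [->|[->|->]]; case: (ord3P y) => [->|[->|->]]. Qed.
Lemma inj6 : injective (pf i1 i2 i0). Proof. by move=> x y; case: (ord3P x) => [->|[->|->]]; case: (ord3P y) => [->|[->|->]]. Qed.
Definition P1 : 'S_3 := perm inj1.
Definition P2 : 'S_3 := perm inj2.
Definition P3 : 'S_3 := perm inj3.
Definition P4 : 'S_3 := perm inj4.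
Definition P5 : 'S_3 := perm inj5.
Definition P6 : 'S_3 := perm inj6.

Lemma allS3 (t : 'S_3) : t = P1 \/ t = P2 \/ t = P3 \/ t = P4 \/ t = P5 \/ t = P6.
Proof.
have Hv : forall x, t x = pf (t i0) (t i1) (t i2) x.
  by move=> x; case: (ord3P x) => [->|[->|->]].
have := dist_perm t; move: Hv; move: (t i0) (t i1) (t i2) => a0 a1 a2 Hv.
have E : forall b0 b1 b2 (h : injective (pf b0 b1 b2)), a0 = b0 -> a1 = b1 -> a2 = b2 -> t = perm h.
  move=> b0 b1 b2 h e0 e1 e2; apply/permP => x; rewrite Hv permE; by subst.
case: (ord3P a0) => [e0|[e0|e0]]; case: (ord3P a1) => [e1|[e1|e1]]; case: (ord3P a2) => [e2|[e2|e2]]; rewrite e0 e1 e2 //= => _.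
- by left; apply: E.
- by do 4 right; left; apply: E.
- by do 2 right; left; apply: E.
- by do 5 right; apply: E.
- by do 3 right; left; apply: E.
- by right; left; apply: E.
Qed.

Lemma PneqP (s t : 'S_3) x : s x != t x -> s != t.
Proof. by apply: contra => /eqP ->. Qed.

Ltac neqP := repeat (apply/andP; split); first
  [ by apply: (@PneqP _ _ i0); rewrite !permE
  | by apply: (@PneqP _ _ i1); rewrite !permE ].

Lemma sumS3 (V : nmodType) (F : 'S_3 -> V) :
  (\sum_t F t = F P1 + F P2 + F P3 + F P4 + F P5 + F P6)%R.
Proof.
rewrite (bigD1 P1) //= (bigD1 P2) /=; last by neqP.
rewrite (bigD1 P3) /=; last by neqP.
rewrite (bigD1 P4) /=; last by neqP.
rewrite (bigD1 P5) /=; last by neqP.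
rewrite (bigD1 P6) /=; last by neqP.
rewrite big1 ?addr0 ?addrA //.
by move=> t; case: (allS3 t) => [->|[->|[->|[->|[->|->]]]]]; rewrite eqxx /= ?andbF.
Qed.

Local Open Scope ring_scope.

Lemma check2 (a0 a1 a2 : 'I_3) : dist3 a0 a1 a2 ->
  (uf a0 a1 a2 0 * uf a0 a1 a2 0 + uf a0 a1 a2 1 * uf a0 a1 a2 1
   + uf a0 a1 a2 2 * uf a0 a1 a2 2 + 2 = 2 * (uf a0 a1 a2 0 + uf a0 a1 a2 1 + uf a0 a1 a2 2))%N.
Proof.
by case: (ord3P a0) => [->|[->|->]]; case: (ord3P a1) => [->|[->|->]];
  case: (ord3P a2) => [->|[->|->]].
Qed.

Definition vr {R : realType} (t : 'S_3) (k : nat) : R := (u t k)%:R - 1.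

Lemma phi_dot (R : realType) a s : phi a s =
  vr a 0 * vr s 0 + vr a 1 * vr s 1 + vr a 2 * vr s 2 :> R.
Proof.
rewrite /phi CDdes_val /vr /u.
have := check1 _ _ _ _ _ _ (dist_perm a) (dist_perm s).
move: (fcd _ _ _ _ _ _) (uf (a i0) (a i1) (a i2) 0) (uf (a i0) (a i1) (a i2) 1)
  (uf (a i0) (a i1) (a i2) 2) (uf (s i0) (s i1) (s i2) 0) (uf (s i0) (s i1) (s i2) 1)
  (uf (s i0) (s i1) (s i2) 2) => cd x0 x1 x2 y0 y1 y2.
move/(congr1 (fun m => m%:R : R)); rewrite !natrD !natrM => H.
lra.
Qed.

Lemma phi_sym (R : realType) a s : phi a s = phi s a :> R.
Proof. by rewrite !phi_dot; ring. Qed.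

Lemma phi_refl (R : realType) a : phi a a = 1 :> R.
Proof.
rewrite phi_dot /vr /u.
have := check2 _ _ _ (dist_perm a).
move: (uf (a i0) (a i1) (a i2) 0) (uf (a i0) (a i1) (a i2) 1)
  (uf (a i0) (a i1) (a i2) 2) => x0 x1 x2.
move/(congr1 (fun m => m%:R : R)); rewrite !natrD !natrM => H.
lra.
Qed.

Lemma phi1 (R : realType) a : phi a 1%g = vr a 0 :> R.
Proof.
rewrite phi_dot /vr /u !perm1 /=.
have -> : uf i0 i1 i2 0 = 2%N by [].
have -> : uf i0 i1 i2 1 = 1%N by [].
have -> : uf i0 i1 i2 2 = 1%N by [].
by ring.
Qed.

Lemma u_le2 t k : (u t k <= 2)%N.
Proof. by rewrite /u /uf; case: ifP => _ //; case: ifP. Qed.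

Set Implicit Arguments. Unset Strict Implicit. Unset Printing Implicit Defensive.

Definition E (n : nat) (p : {ffun 'I_n -> 'S_3}) (k : nat) : nat :=
  (\sum_(i < n) u (p i) k)%N.

Lemma sumS (R : realType) n (p : {ffun 'I_n -> 'S_3}) k :
  \sum_(i < n) vr (p i) k = (E p k)%:R - n%:R :> R.
Proof. by rewrite /vr sumrB natr_sum sumr_const card_ord. Qed.

Lemma sum_sym (R : realType) n (f : 'I_n -> 'I_n -> R) :
  (forall i j, f i j = f j i) ->
  \sum_(i < n) \sum_(j < n) f i j = \sum_(i < n) f i i + 2 * \sum_(i < n) \sum_(j < n | (i < j)%N) f i j.
Proof.
move=> fs.
have H1 : forall i : 'I_n, \sum_(j < n) f i j =
    \sum_(j < n | (i < j)%N) f i j + f i i + \sum_(j < n | (j < i)%N) f i j.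
  move=> i; rewrite (bigID (fun j : 'I_n => (i < j)%N)) /= -addrA; congr (_ + _).
  rewrite (bigD1 i) ?ltnn //=; congr (_ + _); apply: eq_bigl => j.
  by rewrite -leqNgt ltn_neqAle andbC.
under eq_bigr do rewrite H1.
rewrite !big_split /=.
have -> : \sum_(i < n) \sum_(j < n | (j < i)%N) f i j =
          \sum_(i < n) \sum_(j < n | (i < j)%N) f i j.
  rewrite (exchange_big_dep xpredT) //=.
  apply: eq_bigr => i _; apply: eq_bigr => j _; exact: fs.
by rewrite mulr2n mulrDl !mul1r; ring.
Qed.

Lemma sum_pairs (R : realType) n (p : {ffun 'I_n -> 'S_3}) :
  \sum_(i < n) \sum_(j < n | (i < j)%N) phi (p i) (p j) =
  (((E p 0)%:R - n%:R) ^+ 2 + ((E p 1)%:R - n%:R) ^+ 2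
    + ((E p 2)%:R - n%:R) ^+ 2 - n%:R) / 2 :> R.
Proof.
rewrite -!sumS.
have Hsq : forall k, (\sum_(i < n) vr (p i) k) ^+ 2 =
    \sum_(i < n) \sum_(j < n) (vr (p i) k * vr (p j) k : R).
  by move=> k; rewrite expr2 mulr_suml; apply: eq_bigr => i _; rewrite mulr_sumr.
rewrite !Hsq.
have Hall : \sum_(i < n) \sum_(j < n) phi (p i) (p j) =
  \sum_(i < n) \sum_(j < n) vr (p i) 0 * vr (p j) 0 +
   \sum_(i < n) \sum_(j < n) vr (p i) 1 * vr (p j) 1 +
   \sum_(i < n) \sum_(j < n) vr (p i) 2 * vr (p j) 2 :> R.
  under eq_bigr do (under eq_bigr do rewrite phi_dot; rewrite !big_split /=).
  by rewrite !big_split.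
rewrite -Hall.
rewrite sum_sym; last by move=> i j; apply: phi_sym.
have Hd : \sum_(i < n) phi (p i) (p i) = n%:R :> R.
  by under eq_bigr do rewrite phi_refl; rewrite sumr_const card_ord.
rewrite Hd.
set S := \sum_(i < n) _.
lra.
Qed.

Definition Wt {R : realType} (n : nat) (cc l : R) (e0 e1 e2 : nat) : R :=
  expR (cc * ((e0%:R - n%:R + l) ^+ 2 + (e1%:R - n%:R) ^+ 2 + (e2%:R - n%:R) ^+ 2)).

Lemma step1 (R : realType) (n q : nat) (beta J H : R) (p : {ffun 'I_n -> 'S_3}) :
  (2 <= n)%N -> (1 <= q)%N -> 0 < J ->
  expR (- beta * Hmean q J H p) =
  expR (- (beta / 2) * ((n%:R * q%:R * J) / (n%:R - 1)
                          + (H ^+ 2 * (n%:R - 1)) / (q%:R * J))) *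
  Wt n ((beta * q%:R * J) / (2 * (n%:R - 1))) ((H * (n%:R - 1)) / (q%:R * J))
     (E p 0) (E p 1) (E p 2).
Proof.
move=> hn hq hJ.
rewrite /Wt -expRD; congr expR.
rewrite /Hmean sum_pairs.
under eq_bigr do rewrite phi1.
rewrite sumS.
have hn1 : (n%:R - 1 : R) != 0.
  by rewrite subr_eq0 pnatr_eq1; lia.
have hqJ : (q%:R * J : R) != 0.
  rewrite mulf_eq0 negb_or pnatr_eq0 -lt0n hq /=; exact: lt0r_neq0 hJ.
set S0 := (E p 0)%:R - n%:R; set S1 := (E p 1)%:R - n%:R; set S2 := (E p 2)%:R - n%:R.
have -> : (E p 0)%:R - n%:R + H * (n%:R - 1) / (q%:R * J) = S0 + H * (n%:R - 1) / (q%:R * J) by [].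
field.
by rewrite (lt0r_neq0 hJ) pnatr_eq0 -lt0n hq hn1.
Qed.

Definition enc (B x y z : nat) : nat := (x + B * (y + B * z))%N.

Definition Lf {R : realType} (B : nat) (w : nat -> nat -> nat -> R) (P : {poly R}) : R :=
  \sum_(m < B * (B * B)) P`_m * w (m %% B)%N ((m %/ B) %% B)%N (m %/ B %/ B)%N.

Lemma Lf_sum (R : realType) B w I (r : seq I) (Pr : pred I) (F : I -> {poly R}) :
  Lf B w (\sum_(i <- r | Pr i) F i) = \sum_(i <- r | Pr i) Lf B w (F i).
Proof.
rewrite /Lf; under eq_bigr do rewrite coef_sum mulr_suml.
exact: exchange_big.
Qed.

Lemma Lf_Mn (R : realType) B w (P : {poly R}) k : Lf B w (P *+ k) = Lf B w P *+ k.
Proof.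
rewrite /Lf -sumrMnl; apply: eq_bigr => m _.
by rewrite coefMn mulrnAl.
Qed.

Lemma encmod B x W : (0 < B)%N -> (x < B)%N ->
  ((x + B * W) %% B = x /\ (x + B * W) %/ B = W)%N.
Proof.
move=> hB hx; split.
  by rewrite addnC mulnC modnMDl modn_small.
by rewrite addnC mulnC divnMDl // divn_small // addn0.
Qed.

Lemma Lf_X (R : realType) B (w : nat -> nat -> nat -> R) x y z :
  (0 < B)%N -> (x < B)%N -> (y < B)%N -> (z < B)%N ->
  Lf B w 'X^(enc B x y z) = w x y z.
Proof.
move=> hB hx hy hz.
have HK : (enc B x y z < B * (B * B))%N by rewrite /enc; nia.
rewrite /Lf (bigD1 (Ordinal HK)) //= coefXn eqxx mul1r big1 ?addr0.
  rewrite /enc; have [-> ->] := encmod (y + B * z) hB hx.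
  by have [-> ->] := encmod z hB hy.
move=> m /negbTE Hm; rewrite coefXn.
have -> : (nat_of_ord m == enc B x y z) = false by exact: Hm.
by rewrite mul0r.
Qed.

Definition Ppoly {R : realType} (B : nat) : {poly R} :=
  \sum_(t : 'S_3) 'X^(enc B (u t 0) (u t 1) (u t 2)).

Lemma step3 (R : realType) (n : nat) (w : nat -> nat -> nat -> R) :
  \sum_(p : {ffun 'I_n -> 'S_3}) w (E p 0) (E p 1) (E p 2) =
  Lf (2 * n).+1 w (Ppoly (2 * n).+1 ^+ n).
Proof.
set B := (2 * n).+1.
have hB : (0 < B)%N by [].
have HE : forall (p : {ffun 'I_n -> 'S_3}) k, (E p k < B)%N.
  move=> p k; have : (E p k <= \sum_(i < n) 2)%N.
    by rewrite /E; apply: leq_sum => i _; exact: u_le2.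
  by rewrite big_const_ord iter_addn_0 /B; lia.
transitivity (\sum_(p : {ffun 'I_n -> 'S_3}) Lf B w 'X^(enc B (E p 0) (E p 1) (E p 2))).
  by apply: eq_bigr => p _; rewrite Lf_X.
rewrite -Lf_sum; congr (Lf B w _).
rewrite -[n in _ ^+ n]card_ord -prodr_const bigA_distr_bigA /=.
apply: eq_bigr => p _.
have HX := big_morph (fun m => 'X^m : {poly R}) (id1 := 1) (op1 := *%R)
   (exprD 'X) (expr0 'X).
rewrite -HX; congr ('X^_).
rewrite /enc /E big_split /= -big_distrr /= big_split /= -big_distrr /=.
by [].
Qed.

Lemma powbin (R : realType) m d a :
  ('X^m + 'X^(m + d)) ^+ a = \sum_(i < a.+1) 'X^(m * a + d * i) *+ 'C(a, i) :> {poly R}.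
Proof.
rewrite exprDn; apply: eq_bigr => i _; rewrite -!exprM -exprD.
congr ('X^_ *+ _); have := leq_ord i; nia.
Qed.

Lemma big3 (V : comPzRingType) (I J K : finType) (f : I -> V) (g : J -> V) (h : K -> V) :
  (\sum_i f i) * (\sum_j g j) * (\sum_k h k) = \sum_i \sum_j \sum_k f i * g j * h k.
Proof.
rewrite mulr_suml.
rewrite [X in X * _ = _](_ : _ = \sum_i \sum_j f i * g j); last first.
  by apply: eq_bigr => i _; rewrite mulr_sumr.
rewrite mulr_suml; apply: eq_bigr => i _.
rewrite mulr_suml; apply: eq_bigr => j _.
by rewrite mulr_sumr.
Qed.

Definition Aa {R : realType} B : {poly R} := 'X^(enc B 0 1 1) + 'X^(enc B 0 1 1 + 2).
Definition Bb {R : realType} B : {poly R} := 'X^(enc B 1 0 1) + 'X^(enc B 1 0 1 + 2 * B).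
Definition Cc {R : realType} B : {poly R} := 'X^(enc B 1 1 0) + 'X^(enc B 1 1 0 + 2 * (B * B)).

Lemma Ppoly_eq (R : realType) B : Ppoly B = (Cc B + Bb B) + Aa B :> {poly R}.
Proof.
rewrite /Ppoly sumS3 /u !permE /= /Aa /Bb /Cc.
have e1 : enc B 2 1 1 = (enc B 0 1 1 + 2)%N by rewrite /enc; nia.
have e3 : enc B 1 2 1 = (enc B 1 0 1 + 2 * B)%N by rewrite /enc; nia.
have e5 : enc B 1 1 2 = (enc B 1 1 0 + 2 * (B * B))%N by rewrite /enc; nia.
rewrite e1 e3 e5.
ring.
Qed.

Lemma LfABC (R : realType) (n : nat) (cc l : R) (a b c : nat) :
  (a + b + c = n)%N ->
  Lf (2 * n).+1 (Wt n cc l) (Cc (2 * n).+1 ^+ c * Bb (2 * n).+1 ^+ b * Aa (2 * n).+1 ^+ a)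
  = G a l (expR cc) * G b 0 (expR cc) * G c 0 (expR cc).
Proof.
move=> Habc.
set B := (2 * n).+1.
have hB : (0 < B)%N by [].
have -> : Cc B ^+ c * Bb B ^+ b * Aa B ^+ a = Aa B ^+ a * Bb B ^+ b * Cc B ^+ c :> {poly R}.
  by rewrite mulrC [Cc B ^+ c * _]mulrC mulrA.
rewrite /Aa /Bb /Cc !powbin big3 /G big3.
rewrite Lf_sum; apply: eq_bigr => i _; rewrite Lf_sum; apply: eq_bigr => j _.
rewrite Lf_sum; apply: eq_bigr => k _.
rewrite !(mulrnAl, mulrnAr) -!mulrnA -!exprD Lf_Mn.
have hi := leq_ord i; have hj := leq_ord j; have hk := leq_ord k.
rewrite (_ : (_ + _)%N = enc B (2 * i + b + c) (a + 2 * j + c) (a + b + 2 * k)); last first.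
  by rewrite /enc; ring.
rewrite Lf_X //; try (rewrite /B; lia).
rewrite -!expRM /Wt (natrB _ hi) (natrB _ hj) (natrB _ hk) -Habc.
rewrite -[LHS]mulr_natr !natrM ?natrD ?natrM.
set cst := expR _.
have -> : cst = expR (cc * (i%:R - (a%:R - i%:R) + l) ^+ 2) *
   expR (cc * (j%:R - (b%:R - j%:R) + 0) ^+ 2) * expR (cc * (k%:R - (c%:R - k%:R) + 0) ^+ 2).
  by rewrite /cst -!expRD; congr expR; ring.
ring.
Qed.

Lemma trisum (R : realType) n (F : nat -> nat -> nat -> R) :
  \sum_(a < n.+1) \sum_(b < n.+1) \sum_(c < n.+1 | (a + b + c == n)%N) F a b c =
  \sum_(a < n.+1) \sum_(b < (n - a).+1) F a b (n - a - b)%N.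
Proof.
apply eq_bigr; intros a _.
have ha := leq_ord a.
rewrite (big_ord_widen n.+1 (fun b => F a b (n - a - b)%N)); last lia.
rewrite [RHS]big_mkcond; apply: eq_bigr => b _.
case: ifP => hb.
  rewrite (big_pred1 (inord (n - a - b) : 'I_n.+1)); first by rewrite inordK //; lia.
  move=> c /=; rewrite -val_eqE /= inordK; last lia.
  by apply/eqP/eqP; lia.
move/negbT: hb; rewrite -leqNgt => hb.
rewrite big_pred0 // => c; apply/negbTE/eqP => h; lia.
Qed.

Lemma multinomE n a b : (a <= n)%N -> (b <= n - a)%N ->
  multinom n a b (n - a - b) = ('C(n, a) * 'C(n - a, b))%N.
Proof.
move=> ha hb; rewrite /multinom.
rewrite -(bin_fact ha) -(bin_fact hb).
rewrite (_ : ('C(n, a) * (a`! * ('C(n - a, b) * (b`! * (n - a - b)`!))))%N =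
  ('C(n, a) * 'C(n - a, b)) * (a`! * b`! * (n - a - b)`!))%N; last by ring.
by rewrite mulnK // !muln_gt0 !fact_gt0.
Qed.

Unset Implicit Arguments. Set Strict Implicit.
Theorem theorem8 (R : realType) (n q : nat) (beta J H : R) :
  (2 <= n)%N -> (1 <= q)%N -> 0 < beta -> 0 < J ->
  Zn n q J H beta =
    expR (- (beta / 2) * ((n%:R * q%:R * J) / (n%:R - 1)
                          + (H ^+ 2 * (n%:R - 1)) / (q%:R * J))) *
    \sum_(a < n.+1) \sum_(b < n.+1) \sum_(c < n.+1 | (a + b + c == n)%N)
      (multinom n a b c)%:R *
      G a ((H * (n%:R - 1)) / (q%:R * J)) (expR ((beta * q%:R * J) / (2 * (n%:R - 1)))) *
      G b 0 (expR ((beta * q%:R * J) / (2 * (n%:R - 1)))) *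
      G c 0 (expR ((beta * q%:R * J) / (2 * (n%:R - 1)))).
Proof.
move=> hn hq hb hJ.
set cc := (beta * q%:R * J) / (2 * (n%:R - 1)).
set l := (H * (n%:R - 1)) / (q%:R * J).
set K0 := expR _.
rewrite /Zn (eq_bigr (fun p : {ffun 'I_n -> 'S_3} => K0 * Wt n cc l (E p 0) (E p 1) (E p 2))); last first.
  by move=> p _; rewrite step1.
rewrite -mulr_sumr step3; congr (K0 * _).
rewrite (@trisum R n (fun a b c => (multinom n a b c)%:R * G a l (expR cc) * G b 0 (expR cc) * G c 0 (expR cc))).
rewrite Ppoly_eq exprDn Lf_sum; apply: eq_bigr => a _.
have ha := leq_ord a.
rewrite Lf_Mn exprDn mulr_suml Lf_sum -sumrMnl; apply: eq_bigr => b _.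
have hb' := leq_ord b.
rewrite mulrnAl Lf_Mn LfABC; last lia.
by rewrite -mulrnA multinomE // [X in _ *+ X]mulnC -!mulrA mulr_natl.
Qed.
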